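(* Let $G$ be a finite group, $p$ a prime, and $P$ a Sylow $p$-subgroup of $G$. Suppose $\eta(P)$ is strongly closed in $P$ with respect to $G$, and for every $i\ge 0$ the subgroup $\eta(P)^{p^i}$ is weakly closed in $P$ with respect to $G$. Then $\eta$ strongly controls fusion in $G$: for every subset $A\subseteq P$ and every $g\in G$ with $A^g\subseteq P$, there exist $c\in C_G(A)$ and $n\in N_G(\eta(P))$ with $g=cn$.
   Context: For a finite $p$-group $P$, a normal subgroup $N$ of $P$ is powerfully embedded in $P$ if $[N,P]\le N^p$ when $p$ is odd, and $[N,P]\le N^4$ when $p=2$ (here $N^{k}$ denotes the subgroup generated by all $k$-th powers of elements of $N$). $\eta(P)$ denotes the largest powerfully embedded subgroup of $P$ (the product of all powerfully embedded subgroups of $P$). A subgroup $W\le P$ is weakly closed in $P$ with respect to $G$ if for every $g\in G$ with $W^g\le P$ one has $W^g=W$; it is strongly closed in $P$ with respect to $G$ if for every $w\in W$ and $g\in G$ with $w^g\in P$ one has $w^g\in W$. *)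

(* Defs.v *)
From mathcomp Require Import all_boot all_fingroup all_solvable.
Set Implicit Arguments. Unset Strict Implicit. Unset Printing Implicit Defensive.
Local Open Scope group_scope.

Section Defs.
Variable gT : finGroupType.

Definition powgen (N : {set gT}) (k : nat) : {set gT} :=
  <<[set x ^+ k | x in N]>>.

Definition powerfully_embedded (p : nat) (N P : {set gT}) : bool :=
  (N <| P) && ([~: N, P] \subset powgen N (if p == 2 then 4 else p)).

Definition eta (p : nat) (P : {set gT}) : {set gT} :=
  <<\bigcup_(N : {group gT} | powerfully_embedded p N P) N>>.

Definition weakly_closed (W P G : {set gT}) : Prop :=
  forall g, g \in G -> W :^ g \subset P -> W :^ g = W.

Definition strongly_closed (W P G : {set gT}) : Prop :=
  forall w g, w \in W -> g \in G -> w ^ g \in P -> w ^ g \in W.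
End Defs.

(* Main.v *)
Require Import Defs.
From mathcomp Require Import all_boot all_fingroup all_solvable.
From mathcomp Require Import zify.
Set Implicit Arguments. Unset Strict Implicit. Unset Printing Implicit Defensive.
Local Open Scope group_scope.


Section PE.
Variables (p : nat).
Hypothesis pr_p : prime p.

Definition Wf (gT : finGroupType) (H : {set gT}) : {set gT} :=
  if p == 2 then 'Mho^1('Mho^1(H)) else 'Mho^1(H).

Definition pe (gT : finGroupType) (G H : {group gT}) :=
  (H <| G) && ([~: H, G] \subset Wf H).

Lemma Wf_sub (gT : finGroupType) (H : {group gT}) : Wf H \subset 'Mho^1(H).
Proof. by rewrite /Wf; case: ifP => _ //; apply: Mho_sub. Qed.

Lemma WfS (gT : finGroupType) (H K : {group gT}) : H \subset K -> Wf H \subset Wf K.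
Proof. by move=> sHK; rewrite /Wf; case: ifP => _; rewrite ?MhoS. Qed.

Lemma Wf_group (gT : finGroupType) (H : {group gT}) : group_set (Wf H).
Proof. by rewrite /Wf; case: ifP => _; apply: groupP. Qed.
Canonical Wf_grp (gT : finGroupType) (H : {group gT}) := Group (Wf_group H).

Lemma quotient_Mho n (gT : finGroupType) (H L : {group gT}) :
  H \subset 'N(L) -> 'Mho^n(H) / L = 'Mho^n(H / L).
Proof. by move=> nLH; rewrite /quotient morphim_Mho. Qed.

Lemma quotient_Wf (gT : finGroupType) (H L : {group gT}) :
  H \subset 'N(L) -> Wf H / L = Wf (H / L).
Proof.
move=> nLH; rewrite /Wf; case: ifP => _.
  by rewrite (quotient_Mho _ (L:=L)) ?quotient_Mho // (subset_trans (Mho_sub _ _)).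
by rewrite quotient_Mho.
Qed.

Lemma Wf_Mho (gT : finGroupType) (H : {group gT}) : Wf ('Mho^1(H)) = 'Mho^1(Wf H).
Proof. by rewrite /Wf; case: ifP. Qed.

Lemma nil_absorb (gT : finGroupType) (G K B : {group gT}) :
  p.-group G -> K \subset G -> G \subset 'N(B) -> G \subset 'N(K) ->
  K \subset B <*> [~: K, G] -> K \subset B.
Proof.
move=> pG sKG nBG nKG sKBR.
have nBK : K \subset 'N(B) := subset_trans sKG nBG.
have sRG : [~: K, G] \subset G by rewrite commg_subr (subset_trans sKG) ?normG.
have nBR : [~: K, G] \subset 'N(B) := subset_trans sRG nBG.
rewrite -quotient_sub1 //; apply/idPn => ntK.
have := quotientS B sKBR; rewrite quotientYidl // quotientR // => sKR.
have nilG : nilpotent (G / B) by apply: pgroup_nil (quotient_pgroup _ pG).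
have nKGb : G / B \subset 'N_(G / B)(K / B) by rewrite subsetI subxx quotient_norms.
have ntK' : K / B != 1 by rewrite -subG1.
by have := nil_comm_properl nilG (quotientS B sKG) ntK' nKGb; rewrite properE sKR andbF.
Qed.

Lemma commR_sub (gT : finGroupType) (G H : {group gT}) :
  H \subset G -> [~: H, G] \subset G.
Proof. by move=> sHG; rewrite commg_subr (subset_trans sHG) ?normG. Qed.

Lemma exp_p1 (gT : finGroupType) (H : {group gT}) c :
  p.-group H -> 'Mho^1(H) = 1 -> c \in H -> c ^+ p = 1.
Proof.
move=> pH triv Hc.
by have := Mho_p_elt 1 Hc (mem_p_elt pH Hc); rewrite expn1 triv => /set1P.
Qed.

Lemma A_core (gT : finGroupType) (G H : {group gT}) :
  p.-group G -> H <| G -> [~: H, G] \subset Wf H ->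
  'Mho^1([~: H, G]) = 1 -> [~: [~: 'Mho^1(H), G], G] = 1 ->
  [~: 'Mho^1(H), G] = 1.
Proof.
move=> pG nsHG sHGW triv1 triv2.
have [sHG nHG] := andP nsHG.
have pH : p.-group H := pgroupS sHG pG.
have sHGG : [~: H, G] \subset G := commR_sub sHG.
have pHG : p.-group [~: H, G] := pgroupS sHGG pG.
set K := [~: 'Mho^1(H), G].
have cKG : K \subset 'C(G) by apply/commG1P.
have sKHG : K \subset [~: H, G] by apply: commSg; apply: Mho_sub.
have expK : forall d, d \in K -> d ^+ p = 1.
  by move=> d Kd; apply: (exp_p1 pHG triv1); apply: (subsetP sKHG).
have cK : forall d u, d \in K -> u \in G -> commute u d.
  by move=> d u Kd Gu; apply: commute_sym; apply: (centP (subsetP cKG _ Kd)).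
apply/commG1P; rewrite (MhoE 1 pH) gen_subG; apply/subsetP=> _ /imsetP[x Hx ->].
rewrite expn1; apply/centP=> g Gg.
have Gx : x \in G := subsetP sHG _ Hx.
set c := [~ x, g].
have Hc : c \in [~: H, G] := mem_commg Hx Gg.
have cW : c \in Wf H := subsetP sHGW _ Hc.
have cM : c \in 'Mho^1(H) := subsetP (Wf_sub H) _ cW.
have Gc : c \in G := subsetP sHGG _ Hc.
have dK : [~ c, x] \in K := mem_commg cM Gx.
have ex : (x ^+ p) ^ g = x ^+ p.
  rewrite conjXg conjg_mulR -/c expMg_Rmul; last 2 first.
  - exact: cK. 
  - exact: cK.
  rewrite (exp_p1 pHG triv1 Hc) mulg1.
  suff -> : [~ c, x] ^+ 'C(p, 2) = 1 by rewrite mulg1.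
  case: (eqVneq p 2) => [p2 | pn2].
    suff /commgP/eqP-> : commute c x by rewrite expg1n.
    have pM : p.-group 'Mho^1(H) := pgroupS (Mho_sub _ _) pH.
    have : c \in 'Mho^1('Mho^1(H)) by move: cW; rewrite /Wf p2.
    move=> cMM; apply/cent1P; move: c cMM {Hc cW cM Gc dK}.
    apply/subsetP; rewrite (MhoE 1 pM) gen_subG; apply/subsetP=> _ /imsetP[w Mw ->].
    rewrite expn1 p2; apply/cent1P/commgP/conjg_fixP.
    have dK' : [~ w, x] \in K := mem_commg Mw Gx.
    have Gw : w \in G := subsetP sHG _ (subsetP (Mho_sub 1 H) _ Mw).
    rewrite conjXg conjg_mulR expgMn; last exact: cK _ _ dK' Gw.
    by rewrite -p2 (expK _ dK') mulg1.
  have p_gt2 : 2 < p by rewrite ltn_neqAle eq_sym pn2 prime_gt1.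
  have /dvdnP[m ->] : p %| 'C(p, 2) by apply: prime_dvd_bin => //; rewrite p_gt2.
  by rewrite mulnC expgM (expK _ dK) expg1n.
by apply/commgP/conjg_fixP.
Qed.

Lemma normR (gT : finGroupType) (G H : {group gT}) :
  H \subset G -> [~: H, G] <| G.
Proof. by move=> sHG; have := commg_normal H G; rewrite (joing_idPr sHG). Qed.

Lemma A_prime (gT : finGroupType) (G H : {group gT}) :
  p.-group G -> pe G H -> [~: 'Mho^1(H), G] \subset 'Mho^1([~: H, G]).
Proof.
move=> pG /andP[nsHG sHGW]; have [sHG nHG] := andP nsHG.
have nsRG : [~: H, G] <| G := normR sHG.
have nsBG : 'Mho^1([~: H, G]) <| G := char_normal_trans (Mho_char _ _) nsRG.
have nsMG : 'Mho^1(H) <| G := char_normal_trans (Mho_char _ _) nsHG.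
have sMG : 'Mho^1(H) \subset G := normal_sub nsMG.
have nsKG : [~: 'Mho^1(H), G] <| G := normR sMG.
have sKG : [~: 'Mho^1(H), G] \subset G := normal_sub nsKG.
have nsKGG : [~: [~: 'Mho^1(H), G], G] <| G := normR sKG.
set K := [~: 'Mho^1(H), G] in nsKG sKG nsKGG *.
set B := 'Mho^1([~: H, G]) in nsBG *.
have nsLG : B <*> [~: K, G] <| G := normalY nsBG nsKGG.
set L := B <*> [~: K, G] in nsLG *.
have nLG : G \subset 'N(L) := normal_norm nsLG.
have sub_nL : forall A : {set gT}, A \subset G -> A \subset 'N(L).
  by move=> A sAG; apply: subset_trans sAG nLG.
have sRG := normal_sub nsRG.
have step1 : K \subset L.
  rewrite -quotient_sub1 ?sub_nL //.
  rewrite /K quotientR ?sub_nL // quotient_Mho ?sub_nL //.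
  rewrite (A_core (quotient_pgroup _ pG) (quotient_normal _ nsHG)) //.
  - by rewrite -quotientR ?sub_nL // -quotient_Wf ?sub_nL // quotientS.
  - rewrite -quotientR ?sub_nL // -quotient_Mho ?sub_nL //.
    by apply: quotientS1; apply: joing_subl.
  - rewrite -quotient_Mho ?sub_nL // -!quotientR ?sub_nL //.
    by apply: quotientS1; apply: joing_subr.
apply: nil_absorb pG sKG (normal_norm nsBG) (normal_norm nsKG) step1.
Qed.

Lemma pe_mho (gT : finGroupType) (G H : {group gT}) :
  p.-group G -> pe G H -> pe G 'Mho^1(H).
Proof.
move=> pG peH; have /andP[nsHG sHGW] := peH.
rewrite /pe (char_normal_trans (Mho_char _ _) nsHG) /=.
apply: subset_trans (A_prime pG peH) _.
rewrite Wf_Mho; exact: MhoS.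
Qed.

Lemma pe_quotient (gT : finGroupType) (G H L : {group gT}) :
  pe G H -> L <| G -> pe (G / L) (H / L).
Proof.
move=> /andP[nsHG sHGW] nsLG; have [sHG _] := andP nsHG.
have nLG := normal_norm nsLG.
rewrite /pe quotient_normal //= -quotientR ?(subset_trans sHG) //.
by rewrite -quotient_Wf ?(subset_trans sHG) // quotientS.
Qed.

Lemma E_core (gT : finGroupType) (G H : {group gT}) :
  p.-group G -> pe G H -> 'Mho^1('Mho^1(H)) = 1 ->
  {in H &, forall x y, (x * y) ^+ p = x ^+ p * y ^+ p}.
Proof.
move=> pG peH triv x y Hx Hy; have /andP[nsHG sHGW] := peH.
have [sHG nHG] := andP nsHG.
have pH : p.-group H := pgroupS sHG pG.
have pM : p.-group 'Mho^1(H) := pgroupS (Mho_sub _ _) pH.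
have Gx : x \in G := subsetP sHG _ Hx.
have Gy : y \in G := subsetP sHG _ Hy.
case: (eqVneq p 2) => [p2 | pn2].
  move: sHGW; rewrite /Wf p2 /= triv => /trivgP tHG.
  rewrite expgMn //; apply/commgP; apply/eqP; apply/set1P.
  by rewrite -[[set 1]]/(1 : {set gT}) -tHG mem_commg.
have sHGM : [~: H, G] \subset 'Mho^1(H) by move: sHGW; rewrite /Wf (negPf pn2).
have cMG : 'Mho^1(H) \subset 'C(G).
  apply/commG1P; apply/trivgP; apply: subset_trans (A_prime pG peH) _.
  by rewrite -triv MhoS.
have dM : [~ y, x] \in 'Mho^1(H) := subsetP sHGM _ (mem_commg Hy Gx).
have cd : forall u, u \in G -> commute u [~ y, x].
  by move=> u Gu; apply: commute_sym; apply: (centP (subsetP cMG _ dM)).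
rewrite expMg_Rmul; last 2 first.
  - exact: cd Gy.
  - exact: cd Gx.
have p_gt2 : 2 < p by rewrite ltn_neqAle eq_sym pn2 prime_gt1.
have /dvdnP[m ->] : p %| 'C(p, 2) by apply: prime_dvd_bin => //; rewrite p_gt2.
by rewrite mulnC expgM (exp_p1 pM triv dM) expg1n mulg1.
Qed.

Lemma Mho1_self_triv (gT : finGroupType) (M : {group gT}) :
  p.-group M -> M \subset 'Mho^1(M) -> M :=: 1.
Proof.
move=> pM sMM; apply/eqP; apply/idPn => ntM.
have := Phi_proper ntM; rewrite properE => /andP[_].
by rewrite (Phi_joing pM) (subset_trans sMM) ?joing_subr.
Qed.

Lemma E_lemma (gT : finGroupType) (G H : {group gT}) (S : {set gT}) :
  p.-group G -> pe G H -> S \subset H -> H \subset <<S>> ->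
  (forall s, s \in S -> s ^+ p = 1) -> 'Mho^1(H) = 1.
Proof.
move=> pG peH sSH sHS expS; have /andP[nsHG sHGW] := peH.
have [sHG nHG] := andP nsHG.
have pH : p.-group H := pgroupS sHG pG.
have pM : p.-group 'Mho^1(H) := pgroupS (Mho_sub _ _) pH.
have nsMG : 'Mho^1(H) <| G := char_normal_trans (Mho_char _ _) nsHG.
have nsZG : 'Mho^1('Mho^1(H)) <| G := char_normal_trans (Mho_char _ _) nsMG.
set Z := 'Mho^1('Mho^1(H)) in nsZG *.
have nZG := normal_norm nsZG.
have nZH : H \subset 'N(Z) := subset_trans sHG nZG.
have nZS : S \subset 'N(Z) := subset_trans sSH nZH.
have peHb := pe_quotient peH nsZG.
have pGb := quotient_pgroup Z pG.
have trivb : 'Mho^1('Mho^1(H / Z)) = 1.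
  rewrite -!quotient_Mho ?(subset_trans (Mho_sub _ _)) //.
  exact: trivg_quotient.
have homb := E_core pGb peHb trivb.
have Ygrp : group_set [set u in H / Z | u ^+ p == 1].
  apply/group_setP; split; first by rewrite inE group1 expg1n eqxx.
  move=> u v; rewrite !inE => /andP[Hu /eqP pu] /andP[Hv /eqP pv].
  by rewrite groupM // homb // pu pv mulg1 eqxx.
have sHY : H / Z \subset Group Ygrp.
  apply: subset_trans (quotientS Z sHS) _.
  rewrite /quotient morphim_gen // gen_subG; apply/subsetP=> _ /morphimP[s Ns Ss ->].
  by rewrite inE mem_quotient ?(subsetP sSH) //= -morphX // expS // morph1 eqxx.
have sMZ : 'Mho^1(H) \subset Z.
  rewrite -quotient_sub1 ?(subset_trans (Mho_sub _ _)) //.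
  rewrite quotient_Mho // (MhoE 1 (quotient_pgroup Z pH)) gen_subG.
  apply/subsetP=> _ /imsetP[u Hu ->]; rewrite expn1.
  by have := subsetP sHY _ Hu; rewrite inE => /andP[_ /eqP ->]; rewrite inE.
exact: Mho1_self_triv pM sMZ.
Qed.

Lemma pe_Mho (gT : finGroupType) (G N : {group gT}) :
  p.-group G -> pe G N -> forall j, pe G 'Mho^j(N) /\ 'Mho^1('Mho^j(N)) = 'Mho^j.+1(N).
Proof.
move=> pG peN.
have [sNG _] := andP (proj1 (andP peN)).
have pN : p.-group N := pgroupS sNG pG.
have eqj : forall j, pe G 'Mho^j(N) -> 'Mho^1('Mho^j(N)) = 'Mho^j.+1(N).
  move=> j peM; have /andP[nsMG _] := peM.
  have nsLG : 'Mho^j.+1(N) <| G := char_normal_trans (Mho_char _ _) (proj1 (andP peN)).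
  apply/eqP; rewrite eqEsubset; apply/andP; split; last first.
    rewrite (MhoE j.+1 pN) gen_subG; apply/subsetP=> _ /imsetP[x Nx ->].
    rewrite expnSr expgM.
    have Mx : x ^+ (p ^ j) \in 'Mho^j(N) := Mho_p_elt j Nx (mem_p_elt pN Nx).
    have pM : p.-group 'Mho^j(N) := pgroupS (Mho_sub _ _) pN.
    by have := Mho_p_elt 1 Mx (mem_p_elt pM Mx); rewrite expn1.
  have nLG := normal_norm nsLG.
  have sMG : 'Mho^j(N) \subset G := subset_trans (Mho_sub _ _) sNG.
  rewrite -quotient_sub1 ?(subset_trans (Mho_sub _ _)) ?(subset_trans sMG) //.
  rewrite quotient_Mho ?(subset_trans sMG) //.
  have pNb : p.-group (N / 'Mho^j.+1(N)) := quotient_pgroup 'Mho^j.+1(N) pN.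
  rewrite (E_lemma (S := [set x ^+ (p ^ j) | x in N / 'Mho^j.+1(N)]) (quotient_pgroup 'Mho^j.+1(N) pG)
                   (pe_quotient peM nsLG)) //.
  - rewrite /= quotient_Mho ?(subset_trans sNG) //.
    apply/subsetP=> _ /imsetP[x Nx ->]; by rewrite Mho_p_elt // (mem_p_elt pNb).
  - by rewrite /= quotient_Mho ?(subset_trans sNG) // (MhoE j pNb).
  move=> _ /imsetP[x Nx ->]; rewrite -expgM -expnSr.
  have := Mho_p_elt j.+1 Nx (mem_p_elt pNb Nx).
  by rewrite -quotient_Mho ?(subset_trans sNG) // trivg_quotient => /set1P.
  exact: subset_trans sNG nLG.
elim=> [|j [peM eqM]].
  split; last by apply: eqj; rewrite /pe /= Mho0.
  by rewrite /pe /= Mho0.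
have peM' : pe G 'Mho^j.+1(N) by move: (pe_mho pG peM); rewrite /pe /= eqM.
by split; last apply: eqj.
Qed.

Lemma pe_chain (gT : finGroupType) (G N : {group gT}) :
  p.-group G -> pe G N -> forall j, [~: 'Mho^j(N), G] \subset 'Mho^j.+1(N).
Proof.
move=> pG peN j; have [/andP[_ sW] eqM] := pe_Mho pG peN j.
by rewrite -eqM (subset_trans sW) ?Wf_sub.
Qed.

End PE.


Section Gen.
Variables (gT : finGroupType) (p : nat).
Hypothesis pr_p : prime p.

Lemma coprime_stab (z e : gT) (D : {group gT}) :
  p^'.-elt z -> p.-group D -> [~ e, z] \in D -> z \in 'C(D) -> commute e z.
Proof.
move=> p'z pD hD cDz; set h := [~ e, z] in hD.
have chz : commute h z := commute_sym (centP cDz h hD).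
have hiter : forall n, e ^ (z ^+ n) = e * h ^+ n.
  elim=> [|n IHn]; first by rewrite expg0 conjg1 mulg1.
  have hz : h ^ z = h by apply/conjg_fixP/commgP.
  rewrite expgSr conjgM IHn conjMg conjg_mulR -/h conjXg hz expgS. exact: esym (mulgA _ _ _).
have := hiter #[z]; rewrite expg_order conjg1 => he.
have hn : h ^+ #[z] = 1 by apply: (mulgI e); rewrite mulg1 -he.
have ph : p.-elt h := mem_p_elt pD hD.
have dh : #[h] %| #[z] by rewrite order_dvdn hn.
have p'h : p^'.-elt h := pnat_dvd dh p'z.
have h1 : h = 1 by apply/eqP; rewrite -order_eq1; apply/eqP; apply: pnat_1 ph p'h.
by apply/commgP; rewrite -/h h1.
Qed.

Definition stabS (X : {set gT}) (f : nat -> {group gT}) m :=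
  [set x in X | [forall t : 'I_m, [forall e in f t, [~ e, x] \in f t.+1]]].

Lemma stabS_group (X : {group gT}) (f : nat -> {group gT}) m :
  (forall t, t <= m -> X \subset 'N(f t)) -> group_set (stabS X f m).
Proof.
move=> nX; apply/group_setP; split.
  rewrite inE group1; apply/forallP=> t; apply/forall_inP=> e _.
  by rewrite commg1 group1.
move=> x y; rewrite !inE => /andP[Xx /forallP hx] /andP[Xy /forallP hy].
rewrite groupM //; apply/forallP=> t; apply/forall_inP=> e fe.
have /forall_inP hxt := hx t; have /forall_inP hyt := hy t.
rewrite commgMJ groupM ?hyt // memJ_norm ?hxt //.
by apply: (subsetP (nX t.+1 (ltn_ord t))).
Qed.

Lemma stabS_norm (X : {group gT}) (f : nat -> {group gT}) m :
  (forall t, t <= m -> X \subset 'N(f t)) -> X \subset 'N(stabS X f m).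
Proof.
move=> nX; apply/subsetP=> x Xx; rewrite inE; apply/subsetP=> _ /imsetP[k Kk ->].
move: Kk; rewrite !inE => /andP[Xk /forallP hk].
rewrite groupJ //; apply/forallP=> t; apply/forall_inP=> e fe.
have /forall_inP hkt := hk t.
have nxt : x \in 'N(f t) := subsetP (nX t (ltnW (ltn_ord t))) x Xx.
have nxt1 : x \in 'N(f t.+1) := subsetP (nX t.+1 (ltn_ord t)) x Xx.
rewrite -{1}(conjgKV x e) -conjRg memJ_norm // hkt //.
by rewrite memJ_norm ?groupV.
Qed.

Lemma stabS_p'cent (X : {group gT}) (f : nat -> {group gT}) m z :
  (forall t, t <= m -> p.-group (f t)) -> f m = 1%G ->
  z \in stabS X f m -> p^'.-elt z -> z \in 'C(f 0).
Proof.
move=> pf fm1; rewrite inE => /andP[_ /forallP hz] p'z.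
suff : forall u, u <= m -> z \in 'C(f (m - u)) by move/(_ m (leqnn m)); rewrite subnn.
elim=> [_|u IHu lt_um]; first by rewrite subn0 fm1 /= cent1T inE.
have IH := IHu (ltnW lt_um).
have eq1 : (m - u.+1).+1 = m - u by lia.
have lt : m - u.+1 < m by lia.
have /forall_inP hzt := hz (Ordinal lt).
apply/centP=> e fe; apply: commute_sym.
apply: (coprime_stab p'z (pf (m - u) (leq_subr _ _))) => //.
by have := hzt e fe; rewrite /= eq1.
Qed.


Lemma p'cent_prod (K S : {group gT}) (Q : {set gT}) :
  K \subset 'N(Q) -> p.-Sylow(K) S ->
  (forall z, z \in K -> p^'.-elt z -> z \in 'C(Q)) -> K \subset 'C_K(Q) * S.
Proof.
move=> nQK sylS p'c.
have nsCK : 'C_K(Q) <| K by have := subcent_normal K Q; rewrite (setIidPl nQK).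
have nCK := normal_norm nsCK.
have pKC : p.-group (K / 'C_K(Q)).
  apply/pgroupP => q pr_q /(Cauchy pr_q) [ub Kub oub].
  have [u Nu /= Ku eub] := morphimP Kub.
  have cK : <[u]> \subset K by rewrite cycle_subG.
  have K_p : u.`_p \in K := subsetP cK _ (cycle_constt p u).
  have K_p' : u.`_p^' \in K := subsetP cK _ (cycle_constt p^' u).
  have C_p' : u.`_p^' \in 'C_K(Q) by rewrite inE K_p' p'c // p_elt_constt.
  have e : coset 'C_K(Q) u = coset 'C_K(Q) u.`_p.
    by rewrite -{1}(consttC p u) morphM ?(subsetP nCK) //= (coset_id C_p') mulg1.
  move: oub; rewrite eub e => oub.
  have := morph_p_elt (coset_morphism 'C_K(Q)) (subsetP nCK _ K_p) (p_elt_constt p u).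
  by rewrite /p_elt oub (pnatE _ pr_q).
have sylSb := morphim_pHall (coset 'C_K(Q)) (subset_trans (pHall_sub sylS) nCK) sylS.
have eqS := pHall_id sylSb pKC.
by rewrite -quotientSK // /quotient eqS.
Qed.

Lemma decomp (X K S : {group gT}) (Q : {set gT}) x :
  X \subset 'N(Q) -> K * 'N_X(S) = X -> K \subset 'C_K(Q) * S -> S \subset X -> x \in X ->
  exists2 m', m' \in 'N_X(S) & exists2 c, c \in 'C_X(Q) & x = m' * c.
Proof.
move=> nQX defX sKCS sSX Xx.
have sKX : K \subset X by rewrite -defX mulG_subl.
rewrite -defX in Xx; case/mulsgP: Xx => k m0 Kk Nm0 ->.
have := subsetP sKCS k Kk; case/mulsgP => c1 s Cc1 Ss ->.
have Nsm : s * m0 \in 'N_X(S).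
  by rewrite groupM // inE (subsetP sSX) // (subsetP (normG S)).
exists (s * m0) => //.
have Xsm : s * m0 \in X by case/setIP: Nsm.
have nQsm : s * m0 \in 'N(Q) := subsetP nQX _ Xsm.
case/setIP: Cc1 => Kc1 Cc1.
exists (c1 ^ (s * m0)).
  have h1 : c1 ^ (s * m0) \in 'C(Q :^ (s * m0)) by rewrite centJ memJ_conjg.
  move: h1; rewrite (normP nQsm) in_setI => ->; rewrite andbT groupJ // (subsetP sKX _ Kc1).
  by [].
by rewrite -mulgA conjgC.
Qed.

End Gen.


Section Fusion.
Variables (gT : finGroupType) (G P N : {group gT}) (p : nat).
Hypotheses (pr_p : prime p) (sylP : p.-Sylow(G) P).
Hypotheses (nsNP : N <| P)
  (chainP : forall j, [~: 'Mho^j(N), P] \subset 'Mho^j.+1(N))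
  (wc : forall j x, x \in G -> 'Mho^j(N) :^ x \subset P -> 'Mho^j(N) :^ x = 'Mho^j(N)).

Definition good (T : {group gT}) := (T \in 'Syl_p(G)) && (N \subset T).

Let pP : p.-group P := pHall_pgroup sylP.
Let sPG : P \subset G := pHall_sub sylP.
Let sNP : N \subset P := normal_sub nsNP.
Let pN : p.-group N := pgroupS sNP pP.

Lemma MhoJN j m : m \in 'N(N) -> 'Mho^j(N) :^ m = 'Mho^j(N).
Proof. by move=> nNm; rewrite -MhoJ (normP nNm). Qed.

Lemma good_conj (T : {group gT}) : good T -> exists2 m, m \in 'N_G(N) & T :=: P :^ m.
Proof.
case/andP; rewrite inE => sylT sNT.
have [x Gx defT] := Sylow_trans sylP sylT.
exists x => //; rewrite inE Gx /=.
have h : 'Mho^0(N) :^ x^-1 \subset P by rewrite Mho0 sub_conjgV -defT.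
by have := wc (groupVr Gx) h; rewrite Mho0 => /normP; rewrite groupV.
Qed.

Lemma good_wc (T : {group gT}) j x : good T -> x \in G ->
  'Mho^j(N) :^ x \subset T -> 'Mho^j(N) :^ x = 'Mho^j(N).
Proof.
move=> gT_ Gx; have [m /setIP[Gm nNm] ->] := good_conj gT_.
rewrite -sub_conjgV -conjsgM => /wc; rewrite groupM ?groupV // => /(_ isT) e.
by rewrite -(mulgKV m x) conjsgM e MhoJN.
Qed.

Lemma good_props (T : {group gT}) j : good T ->
  [/\ 'Mho^j(N) \subset T, T \subset 'N('Mho^j(N)) &
      [~: 'Mho^j(N), T] \subset 'Mho^j.+1(N)].
Proof.
move=> gT_; have [m /setIP[Gm nNm] ->] := good_conj gT_.
have nMP : P \subset 'N('Mho^j(N)) := char_norm_trans (Mho_char _ _) (normal_norm nsNP).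
split.
- by rewrite -(MhoJN j nNm) conjSg (subset_trans (Mho_sub _ _)).
- by rewrite -(MhoJN j nNm) normJ conjSg.
by rewrite -(MhoJN j nNm) -(MhoJN j.+1 nNm) -conjsRg conjSg.
Qed.


Lemma Mho_triv : exists k, 'Mho^k(N) = 1.
Proof.
exists (logn p #|N|); apply/trivgP; rewrite /= (MhoE _ pN) gen_subG.
apply/subsetP=> _ /imsetP[x Nx ->]; rewrite -(card_pgroup pN) expg_cardG //.
Qed.

Lemma num_aux a b c d n : a < b -> b <= c -> d - a <= n.+1 -> d - c <= n.
Proof. by move=> *; lia. Qed.

Lemma card_syl (T : {group gT}) : T \in 'Syl_p(G) -> #|T| = #|P|.
Proof. by rewrite inE => sylT; rewrite (card_Hall sylT) (card_Hall sylP). Qed.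

Lemma syl_eq (T R : {group gT}) : T \in 'Syl_p(G) -> R \in 'Syl_p(G) ->
  #|P| <= #|T :&: R| -> T :=: R.
Proof.
move=> sylT sylR le.
have eTR : T :&: R = T.
  apply/eqP; rewrite eqEcard subsetIl (card_syl sylT) le //.
by apply/eqP; rewrite eqEcard -eTR subsetIr /= eTR (card_syl sylT) (card_syl sylR) leqnn.
Qed.

Lemma good_syl (T : {group gT}) x : good T -> x \in G -> N \subset T :^ x -> good (T :^ x)%G.
Proof.
by case/andP=> sylT _ Gx sN; rewrite /good sN andbT inE pHallJ //; rewrite inE in sylT.
Qed.


Definition IHprop n := forall (T R : {group gT}) (A : {set gT}),
  good T -> R \in 'Syl_p(G) -> A \subset T :&: R -> #|P| - #|T :&: R| <= n ->
  exists2 c, c \in 'C_G(A) & N \subset R :^ c.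

Lemma step n : IHprop n -> forall (T R Q : {group gT}) (A : {set gT}),
  good T -> R \in 'Syl_p(G) -> Q :=: T :&: R -> A \subset Q ->
  #|P| - #|Q| <= n.+1 -> #|Q| < #|P| ->
  exists2 c, c \in 'C_G(A) & N \subset R :^ c.
Proof.
move=> IH T R Q A gT_ sylR defQ sAQ hn ltQP.
have sylT : p.-Sylow(G) T by case/andP: gT_; rewrite inE.
have pT := pHall_pgroup sylT; have sTG := pHall_sub sylT.
have sylR' : p.-Sylow(G) R by rewrite inE in sylR.
have pR := pHall_pgroup sylR'; have sRG := pHall_sub sylR'.
have sQT : Q \subset T by rewrite defQ subsetIl.
have sQR : Q \subset R by rewrite defQ subsetIr.
have sQG : Q \subset G := subset_trans sQT sTG.
have cT : #|T| = #|P| by apply: card_syl; rewrite inE.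
have cR : #|R| = #|P| by apply: card_syl.
have prQT : Q \proper T by rewrite properEcard sQT cT.
have prQR : Q \proper R by rewrite properEcard sQR cR.
have nilT := pgroup_nil pT; have nilR := pgroup_nil pR.
pose X := 'N_G(Q)%G.
have sXG : X \subset G := subsetIl _ _.
have nQX : X \subset 'N(Q) := subsetIr _ _.
have prQNT := nilpotent_proper_norm nilT prQT.
have sNTX : 'N_T(Q) \subset X by rewrite setSI.
have pNTQ : p.-group 'N_T(Q) := pgroupS (subsetIl _ _) pT.
have [U0 sylU0 sNU0] := Sylow_superset sNTX pNTQ.
have [T1 sylT1 sU0T1] := Sylow_superset (subset_trans (pHall_sub sylU0) sXG) (pHall_pgroup sylU0).
have [c0 Cc0 sNT1] : exists2 c, c \in 'C_G('N_T(Q)) & N \subset T1 :^ c.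
  apply: (IH T T1) => //; first by rewrite inE.
    by rewrite subsetI subsetIl (subset_trans sNU0).
  apply: num_aux (proper_card prQNT) _ hn.
  by apply: subset_leq_card; rewrite subsetI subsetIl (subset_trans sNU0).
have [Gc0 cc0] := setIP Cc0.
have cQc0 : c0 \in 'C(Q) := subsetP (centS (proper_sub prQNT)) _ cc0.
have nQc0 : c0 \in 'N(Q) := subsetP (cent_sub Q) _ cQc0.
have Xc0 : c0 \in X by rewrite inE Gc0.
pose T' := (T1 :^ c0)%G; pose U := (U0 :^ c0)%G.
have gT' : good T' by rewrite /good sNT1 andbT inE pHallJ.
have sylU : p.-Sylow(X) U by rewrite pHallJ.
have sUT' : U \subset T' by rewrite conjSg.
have sQU : Q \subset U.
  by rewrite -(normP nQc0) conjSg (subset_trans (proper_sub prQNT)).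
have sXN : 'N_R(Q) \subset X by rewrite setSI.
have pNRQ : p.-group 'N_R(Q) := pgroupS (subsetIl _ _) pR.
have [x Xx sNRx] := Sylow_subJ sylU sXN pNRQ.
have prQNR := nilpotent_proper_norm nilR prQR.
have [Gx nQx] := setIP Xx.
have sT'G : T' \subset G by case/andP: gT'; rewrite inE => /pHall_sub.
have sQT' : Q \subset T' := subset_trans sQU sUT'.
case: (boolP (N \subset Q)) => [sNQ | nsNQ].
  have nNx : N :^ x = N.
    have := @good_wc T 0 x gT_ Gx; rewrite Mho0; apply.
    by rewrite (subset_trans _ sQT) // -(normP nQx) conjSg.
  have gT2 : good (T' :^ x)%G.
    by apply: good_syl => //; rewrite -nNx conjSg (subset_trans sNQ).
  apply: (IH (T' :^ x)%G R) => //.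
    rewrite subsetI (subset_trans sAQ sQR) andbT (subset_trans sAQ) //.
    by rewrite -(normP nQx) conjSg.
  apply: num_aux (proper_card prQNR) _ hn; apply: subset_leq_card.
  by rewrite subsetI subsetIl andbT (subset_trans sNRx) ?conjSg.
have [k hk] := Mho_triv.
have exi : exists i, 'Mho^i(N) \subset Q by exists k; rewrite hk sub1G.
case: (ex_minnP exi) => i hi mini.
case: i hi mini => [|i'] hi mini; first by rewrite Mho0 (negPf nsNQ) in hi.
have nsi' : ~~ ('Mho^i'(N) \subset Q).
  by apply/negP => /mini; rewrite ltnn.
have pT' : p.-group T' by case/andP: gT'; rewrite inE => /pHall_pgroup.
pose f := fun t => if t is t'.+1 then ('Mho^(i'.+1 + t')(N))%G else Q.
have sMi : forall t', 'Mho^(i'.+1 + t')(N) \subset Q.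
  by move=> t'; apply: subset_trans (Mho_leq _ (leq_addr _ _)) hi.
have fm1 : f k.+1 = 1%G.
  by apply: val_inj; apply/trivgP; rewrite /= -hk Mho_leq // leq_addl.
have nX : forall t, t <= k.+1 -> X \subset 'N(f t).
  case=> [|t'] _ /=; first exact: nQX.
  apply/subsetP=> z Xz; have [Gz nQz] := setIP Xz; apply/normP.
  apply: (good_wc gT') Gz _.
  by rewrite (subset_trans _ sQT') // -(normP nQz) conjSg sMi.
have pf : forall t, t <= k.+1 -> p.-group (f t).
  case=> [|t'] _ /=; first exact: pgroupS sQT' pT'.
  exact: pgroupS (subset_trans (sMi t') sQT') pT'.
pose K := Group (stabS_group nX).
have sKX : K \subset X by apply/subsetP=> z; rewrite inE => /andP[].
have nsKX : K <| X by rewrite /normal sKX stabS_norm.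
have [sMT' nMT' cMT'] := good_props i' gT'.
pose J := (Q <*> 'Mho^i'(N))%G.
have nMQ : Q \subset 'N('Mho^i'(N)) := subset_trans sQT' nMT'.
have sJT' : J \subset T' by rewrite join_subG sQT' sMT'.
have prQJ : Q \proper J.
  rewrite properE joing_subl /=; apply: contra nsi' => sJQ.
  exact: subset_trans (joing_subr _ _) sJQ.
have := nilpotent_proper_norm (pgroup_nil (pgroupS sJT' pT')) prQJ.
case/properP => _ [y0 Ny0 nQy0].
have [Jy0 ny0] := setIP Ny0.
move: Jy0; rewrite /J /= norm_joinEl // => /mulsgP[q y Qq My ey0].
have nQy : y \in 'N(Q).
  by rewrite -(mulKg q y) -ey0 groupM ?groupV // (subsetP (normG Q)).
have yQ : y \notin Q by apply: contra nQy0 => Qy; rewrite ey0 groupM.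
have T'y : y \in T' := subsetP sMT' _ My.
have Gy : y \in G := subsetP sT'G _ T'y.
have Xy : y \in X by rewrite inE Gy.
have eqU : 'N_T'(Q) = U.
  apply: (sub_pHall sylU) (pgroupS (subsetIl _ _) pT') _ _.
    by rewrite subsetI sUT' (subset_trans (pHall_sub sylU) nQX).
  by rewrite setSI.
have Uy : y \in U by rewrite -eqU inE T'y nQy.
have Ky : y \in K.
  rewrite inE Xy; apply/forallP => [[t ltm]]; apply/forall_inP => e /=.
  case: t ltm => [|t'] _ /= fe.
    rewrite addn0 -invg_comm groupV.
    exact: subsetP cMT' _ (mem_commg My (subsetP sQT' _ fe)).
  have [_ _ cM] := good_props (i'.+1 + t') gT'.
  by rewrite addnS; exact: subsetP cM _ (mem_commg fe T'y).
have sylS := Sylow_setI_normal nsKX sylU.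
have defX := Frattini_arg nsKX sylS.
have p'c : forall z, z \in K -> p^'.-elt z -> z \in 'C(Q).
  by move=> z Kz p'z; exact: (stabS_p'cent pr_p pf fm1 Kz p'z).
have sKCS := p'cent_prod (subset_trans sKX nQX) sylS p'c.
have [m' Nm' [c Cc ex]] := decomp nQX defX sKCS (subset_trans (subsetIl _ _) sKX) Xx.
have [Xm' nSm'] := setIP Nm'; have [Gm' nQm'] := setIP Xm'.
have [Xc cQc] := setIP Cc; have [Gc _] := setIP Xc.
pose Q1 := (Q <*> (K :&: U))%G.
have sQ1U : Q1 \subset U by rewrite join_subG sQU subsetIr.
have eQ1 : Q1 :^ m' = Q1 by rewrite /= conjYg (normP nQm') (normP nSm').
have prQQ1 : #|Q| < #|Q1|.
  apply: proper_card; apply/properP; split; first exact: joing_subl.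
  by exists y => //; apply: subsetP (joing_subr _ _) _ _; rewrite inE Ky.
have [c' Cc' sN'] : exists2 c', c' \in 'C_G(Q1) & N \subset (T' :^ m') :^ c'.
  apply: (IH T' (T' :^ m')%G) => //.
  - by case/andP: gT'; rewrite !inE => sylT' _; rewrite pHallJ.
  - by rewrite subsetI (subset_trans sQ1U sUT') -eQ1 conjSg (subset_trans sQ1U).
  apply: num_aux prQQ1 _ hn; apply: subset_leq_card.
  by rewrite subsetI (subset_trans sQ1U sUT') -eQ1 conjSg (subset_trans sQ1U).
have [Gc' cc'] := setIP Cc'.
have cQc' : c' \in 'C(Q) := subsetP (centS (joing_subl _ _)) _ cc'.
have gT2 : good ((T' :^ m') :^ c')%G.
  by rewrite /good sN' andbT; case/andP: gT'; rewrite !inE => sylT' _; rewrite !pHallJ.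
have Gcc : c^-1 * c' \in G by rewrite groupM ?groupV.
have eQ : Q :^ (c^-1 * c') = Q.
  by apply/normP; rewrite groupM ?groupV // (subsetP (cent_sub Q)).
have sQT2 : Q \subset (T' :^ m') :^ c'.
  rewrite -(normP (subsetP (cent_sub Q) _ cQc')) conjSg.
  apply: subset_trans (_ : Q \subset Q1 :^ m') _; first by rewrite eQ1 joing_subl.
  by rewrite conjSg (subset_trans sQ1U sUT').
have [c'' Cc'' sN''] : exists2 c'', c'' \in 'C_G(A) & N \subset (R :^ (c^-1 * c')) :^ c''.
  apply: (IH ((T' :^ m') :^ c')%G (R :^ (c^-1 * c'))%G) => //.
  - by rewrite inE pHallJ.
  - rewrite subsetI (subset_trans sAQ sQT2) /=; apply: subset_trans sAQ _.
    by rewrite -{1}eQ conjSg.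
  apply: num_aux (proper_card prQNR) _ hn.
  rewrite -(cardJg _ (c^-1 * c')); apply: subset_leq_card.
  rewrite subsetI conjSg subsetIl andbT.
  have := sNRx; rewrite -(conjSg _ _ (c^-1 * c')) -conjsgM ex -mulgA (mulgA c).
  rewrite mulgV mul1g conjsgM => h; apply: subset_trans h _.
  rewrite conjsgM; have := sUT'; rewrite -(conjSg _ _ m') -(conjSg _ _ c'); exact.
exists (c^-1 * c' * c'').
  have sCA : 'C_G(Q) \subset 'C_G(A) := setIS _ (centS sAQ).
  have sC1A : 'C_G(Q1) \subset 'C_G(A).
    by apply: setIS; apply: centS; apply: subset_trans sAQ (joing_subl _ _).
  rewrite !groupM ?groupV //; apply: (subsetP sCA).
  - by rewrite inE Gc cQc.
  by rewrite inE Gc' cQc'.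
by rewrite conjsgM.
Qed.


Lemma main_ind n : IHprop n.
Proof.
elim: n => [|n IH] T R A gT_ sylR sA hn.
  have ge : #|P| <= #|T :&: R| by move: hn; rewrite leqn0 subn_eq0.
  have eTR := syl_eq (andP gT_).1 sylR ge.
  by exists 1; [exact: group1 | rewrite conjsg1 -eTR (andP gT_).2].
case: (ltnP #|T :&: R| #|P|) => [lt | ge].
  exact: (@step n IH T R (T :&: R)%G A gT_ sylR (erefl _) sA hn lt).
have eTR := syl_eq (andP gT_).1 sylR ge.
by exists 1; [exact: group1 | rewrite conjsg1 -eTR (andP gT_).2].
Qed.

Theorem fusion_control (A : {set gT}) g : A \subset P -> g \in G -> A :^ g \subset P ->
  exists c, exists n, [/\ c \in 'C_G(A), n \in 'N_G(N) & g = c * n].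
Proof.
move=> sAP Gg sAgP.
have sylR : (P :^ g^-1)%G \in 'Syl_p(G) by rewrite inE pHallJ ?groupV.
have gP : good P by rewrite /good sNP andbT inE.
have sA : A \subset P :&: (P :^ g^-1)%G.
  by rewrite subsetI sAP /= -sub_conjgV invgK.
have [c Cc sNc] := @main_ind #|P| P (P :^ g^-1)%G A gP sylR sA (leq_subr _ _).
have [Gc _] := setIP Cc.
have Gn : c^-1 * g \in G by rewrite groupM ?groupV.
have h : 'Mho^0(N) :^ (c^-1 * g) \subset P.
  by rewrite Mho0 -(invgK (c^-1 * g)) sub_conjgV invMg !invgK conjsgM.
have := wc Gn h; rewrite Mho0 => /normP nN.
exists c, (c^-1 * g); split => //; first by rewrite inE Gn.
by rewrite mulKVg.
Qed.

End Fusion.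


Section EtaFacts.
Variables (gT : finGroupType) (P : {group gT}) (p : nat).
Hypotheses (pr_p : prime p) (pP : p.-group P).

Lemma eta_group_set : group_set (eta p P).
Proof. by rewrite /eta; apply: groupP. Qed.
Definition etaG := Group eta_group_set.

Lemma pe_sub (N : {group gT}) : powerfully_embedded p N P -> N \subset etaG.
Proof.
move=> peN; rewrite /= /eta; apply: subset_trans _ (subset_gen _).
exact: (bigcup_max N).
Qed.

Lemma eta_normal : etaG <| P.
Proof.
rewrite /normal /= /eta gen_subG; apply/andP; split.
  by apply/bigcupsP=> N /andP[/andP[]].
apply: norms_gen; apply: norms_bigcup; apply/bigcapsP=> N /andP[/andP[]].
by [].
Qed.

Lemma powgen_Mho (H : {group gT}) i : H \subset P -> powgen H (p ^ i) = 'Mho^i(H).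
Proof. by move=> sHP; rewrite /powgen (MhoE i (pgroupS sHP pP)). Qed.

Lemma Mho2_sub (H : {group gT}) : H \subset P -> 'Mho^2(H) \subset 'Mho^1('Mho^1(H)).
Proof.
move=> sHP; have pH := pgroupS sHP pP.
rewrite (MhoE 2 pH) gen_subG; apply/subsetP=> _ /imsetP[x Hx ->].
have M1 : x ^+ p \in 'Mho^1(H) by have := Mho_p_elt 1 Hx (mem_p_elt pH Hx); rewrite expn1.
have pM := pgroupS (Mho_sub 1 H) pH.
by have := Mho_p_elt 1 M1 (mem_p_elt pM M1); rewrite expn1 -expgM mulnn.
Qed.

Lemma eta_pe : pe p P etaG.
Proof.
have nsEP := eta_normal; have [sEP nEP] := andP nsEP.
rewrite /pe nsEP /=.
have nsWP : Wf p etaG <| P.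
  rewrite /Wf; case: ifP => _.
    exact: char_normal_trans (Mho_char _ _) (char_normal_trans (Mho_char _ _) nsEP).
  exact: char_normal_trans (Mho_char _ _) nsEP.
have nWP := normal_norm nsWP.
rewrite -quotient_cents2 ?(subset_trans sEP) //.
rewrite /= {1}/eta /quotient morphim_gen; last first.
  by apply: subset_trans _ nWP; exact: subset_trans (subset_gen _) sEP.
rewrite gen_subG; apply/subsetP=> _ /morphimP[u Nu /bigcupP[N peN Nu'] ->].
have sNE := pe_sub peN.
have /andP[/andP[sNP _] sNW] := peN.
have sRW : [~: N, P] \subset Wf p etaG.
  apply: subset_trans sNW _; rewrite /Wf.
  case: eqP => [p2 | _].
    have -> : 4 = (p ^ 2)%N by rewrite p2.
    rewrite (powgen_Mho 2 sNP); apply: subset_trans (Mho2_sub sNP) _.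
    by apply: MhoS; apply: MhoS.
  by rewrite -(expn1 p) powgen_Mho // MhoS.
have := quotient_cents2r sRW; move/subsetP; apply.
by rewrite mem_quotient.
Qed.

End EtaFacts.

Theorem proposition3p5 (gT : finGroupType) (G P : {group gT}) (p : nat) :
  prime p -> P \in 'Syl_p(G) ->
  strongly_closed (eta p P) P G ->
  (forall i : nat, weakly_closed (powgen (eta p P) (p ^ i)) P G) ->
  forall (A : {set gT}) (g : gT),
    A \subset P -> g \in G -> A :^ g \subset P ->
    exists c, exists n,
      [/\ c \in 'C_G(A), n \in 'N_G(eta p P) & g = c * n].
Proof.
move=> pr_p sylP _ wcH A g sAP Gg sAgP.
have sylP' : p.-Sylow(G) P by rewrite inE in sylP.
have pP := pHall_pgroup sylP'.
have nsEP := eta_normal P p.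
have chainP := pe_chain pr_p pP (eta_pe pP).
have sEP : etaG P p \subset P := normal_sub nsEP.
have wc : forall j x, x \in G -> 'Mho^j(etaG P p) :^ x \subset P ->
    'Mho^j(etaG P p) :^ x = 'Mho^j(etaG P p).
  by move=> j x Gx; rewrite -(powgen_Mho pP j sEP); apply: wcH.
exact: (fusion_control pr_p sylP' nsEP chainP wc sAP Gg sAgP).
Qed.
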